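(* Let $F\colon\mathcal{A}\to\mathcal{B}$ be an exceptional functor and $A\in\mathcal{A}$. Then $$\mathcal{B}_{FA}=\langle \operatorname{im}F,\ \ker L\cap\ker\operatorname{Hom}^*(A,R(-))\rangle=\langle\operatorname{im}F,\ \ker L\cap(FA)^{\perp}\rangle$$ is a semiorthogonal decomposition.
   Context: All categories are $k$-linear triangulated, enhanced, and all functors are exact. $F$ is exceptional: it is fully faithful with left adjoint $L$ and right adjoint $R$. The dual twist $T'$ is defined by $T'\to\mathrm{id}_{\mathcal{B}}\xrightarrow{\eta_L}FL$, where $\eta_L$ is the unit. The Frobenius neighbourhood is $\mathcal{B}_{FA}:=\{B\in\mathcal{B}\mid\operatorname{Hom}^*(A,RT'B)=0\}$. Further notation: - $\operatorname{Hom}^*(X,Y)=\bigoplus_i\operatorname{Hom}(X,Y[i])[-i]$. - $X^{\perp}=\{B\mid\operatorname{Hom}^*(X,B)=0\}$. - $\ker\operatorname{Hom}^*(A,R(-))=\{B\mid\operatorname{Hom}^*(A,RB)=0\}$. A semiorthogonal decomposition $\mathcal{D}=\langle\mathcal{X},\mathcal{Y}\rangle$ of a triangulated category $\mathcal{D}$ by full subcategories $\mathcal{X},\mathcal{Y}$ means: - $\operatorname{Hom}^*(Y,X)=0$ for all $X\in\mathcal{X}$, $Y\in\mathcal{Y}$; - every $D\in\mathcal{D}$ fits into a triangle $D_{\mathcal{Y}}\to D\to D_{\mathcal{X}}$ with $D_{\mathcal{X}}\in\mathcal{X}$ and $D_{\mathcal{Y}}\in\mathcal{Y}$. *)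

(* Defs.v *)
From HB Require Import structures.
From mathcomp Require Import all_boot all_algebra.
Set Implicit Arguments. Unset Strict Implicit. Unset Printing Implicit Defensive.
Import GRing.Theory.
Local Open Scope ring_scope.

Record kcat (k : fieldType) := KCat {
  ob : Type;
  mor : ob -> ob -> lmodType k;
  idm : forall X, mor X X;
  mcomp : forall X Y Z, mor Y Z -> mor X Y -> mor X Z;
  comp_idl : forall X Y (f : mor X Y), mcomp (idm Y) f = f;
  comp_idr : forall X Y (f : mor X Y), mcomp f (idm X) = f;
  comp_assoc : forall X Y Z W (h : mor Z W) (g : mor Y Z) (f : mor X Y),
      mcomp h (mcomp g f) = mcomp (mcomp h g) f;
  comp_linl : forall X Y Z (a : k) (g g' : mor Y Z) (f : mor X Y),
      mcomp (a *: g + g') f = a *: mcomp g f + mcomp g' f;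
  comp_linr : forall X Y Z (a : k) (g : mor Y Z) (f f' : mor X Y),
      mcomp g (a *: f + f') = a *: mcomp g f + mcomp g f'
}.
Arguments ob {k} _.
Arguments mor {k _} X Y.
Arguments idm {k _} X.
Arguments mcomp {k _ X Y Z} g f.

Section CatDefs.
Variables (k : fieldType) (C : kcat k).

Definition is_iso (X Y : ob C) (f : mor X Y) :=
  exists g : mor Y X, mcomp g f = idm X /\ mcomp f g = idm Y.

Definition is_zero (Z : ob C) :=
  forall X : ob C, (forall f : mor Z X, f = 0) /\ (forall f : mor X Z, f = 0).

Definition is_biprod (X Y P : ob C) :=
  exists (i1 : mor X P) (i2 : mor Y P) (p1 : mor P X) (p2 : mor P Y),
    [/\ mcomp p1 i1 = idm X, mcomp p2 i2 = idm Y, mcomp p1 i2 = 0,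
        mcomp p2 i1 = 0 & mcomp i1 p1 + mcomp i2 p2 = idm P].
End CatDefs.

Record functor (k : fieldType) (C D : kcat k) := Functor {
  fob : ob C -> ob D;
  fmap : forall X Y, mor X Y -> mor (fob X) (fob Y);
  fmap_id : forall X, fmap (idm X) = idm (fob X);
  fmap_comp : forall X Y Z (g : mor Y Z) (f : mor X Y),
      fmap (mcomp g f) = mcomp (fmap g) (fmap f);
  fmap_lin : forall X Y (a : k) (f g : mor X Y),
      fmap (a *: f + g) = a *: fmap f + fmap g
}.
Arguments fob {k C D} _ X.
Arguments fmap {k C D} _ {X Y} _.

(* naturality of a family a : F => G, for arbitrary (e.g. composite)
   functorial actions Fm, Gm on morphisms *)
Definition natural (k : fieldType) (C D : kcat k) (F G : ob C -> ob D)
  (Fm : forall X Y, mor X Y -> mor (F X) (F Y))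
  (Gm : forall X Y, mor X Y -> mor (G X) (G Y))
  (a : forall X, mor (F X) (G X)) :=
  forall X Y (f : mor X Y), mcomp (a Y) (Fm X Y f) = mcomp (Gm X Y f) (a X).

Record triang (k : fieldType) (C : kcat k) := Triang {
  sh : functor C C;
  shi : functor C C;
  sh_eta : forall X, mor X (fob shi (fob sh X));
  sh_eta_iso : forall X, is_iso (sh_eta X);
  sh_eta_nat : natural (fun X Y f => f) (fun X Y f => fmap shi (fmap sh f)) sh_eta;
  sh_eps : forall X, mor (fob sh (fob shi X)) X;
  sh_eps_iso : forall X, is_iso (sh_eps X);
  sh_eps_nat : natural (fun X Y f => fmap sh (fmap shi f)) (fun X Y f => f) sh_eps;
  zero_ex : exists Z : ob C, is_zero Z;
  biprod_ex : forall X Y : ob C, exists P, is_biprod X Y P;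
  dist : forall X Y Z : ob C, mor X Y -> mor Y Z -> mor Z (fob sh X) -> Prop;
  TR1_iso : forall X Y Z X' Y' Z' (f : mor X Y) (g : mor Y Z) (h : mor Z (fob sh X))
      (f' : mor X' Y') (g' : mor Y' Z') (h' : mor Z' (fob sh X'))
      (a : mor X X') (b : mor Y Y') (c : mor Z Z'),
      is_iso a -> is_iso b -> is_iso c ->
      mcomp b f = mcomp f' a -> mcomp c g = mcomp g' b ->
      mcomp (fmap sh a) h = mcomp h' c ->
      dist f g h -> dist f' g' h';
  TR1_id : forall X Z, is_zero Z -> dist (idm X) (0 : mor X Z) (0 : mor Z (fob sh X));
  TR1_cone : forall X Y (f : mor X Y),
      exists Z (g : mor Y Z) (h : mor Z (fob sh X)), dist f g h;
  TR2 : forall X Y Z (f : mor X Y) (g : mor Y Z) (h : mor Z (fob sh X)),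
      dist f g h <-> dist g h (- fmap sh f);
  TR3 : forall X Y Z X' Y' Z' (f : mor X Y) (g : mor Y Z) (h : mor Z (fob sh X))
      (f' : mor X' Y') (g' : mor Y' Z') (h' : mor Z' (fob sh X'))
      (a : mor X X') (b : mor Y Y'),
      dist f g h -> dist f' g' h' -> mcomp b f = mcomp f' a ->
      exists c : mor Z Z', mcomp c g = mcomp g' b /\ mcomp (fmap sh a) h = mcomp h' c;
  TR4 : forall X Y Z Z' X' Y' (f : mor X Y) (g : mor Y Z)
      (u1 : mor Y Z') (d1 : mor Z' (fob sh X))
      (u2 : mor Z X') (d2 : mor X' (fob sh Y))
      (u3 : mor Z Y') (d3 : mor Y' (fob sh X)),
      dist f u1 d1 -> dist g u2 d2 -> dist (mcomp g f) u3 d3 ->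
      exists (a : mor Z' Y') (b : mor Y' X'),
        [/\ dist a b (mcomp (fmap sh u1) d2),
            mcomp a u1 = mcomp u3 g, mcomp d3 a = d1,
            mcomp b u3 = u2 & mcomp d2 b = mcomp (fmap sh f) d3]
}.
Arguments sh {k C} _.
Arguments shi {k C} _.
Arguments dist {k C} _ {X Y Z} _ _ _.

Record exfunctor (k : fieldType) (C D : kcat k) (TC : triang C) (TD : triang D) :=
  ExFunctor {
  ef :> functor C D;
  ephi : forall X, mor (fob ef (fob (sh TC) X)) (fob (sh TD) (fob ef X));
  ephi_iso : forall X, is_iso (ephi X);
  ephi_nat : natural (fun X Y f => fmap ef (fmap (sh TC) f))
                     (fun X Y f => fmap (sh TD) (fmap ef f)) ephi;
  ef_dist : forall X Y Z (f : mor X Y) (g : mor Y Z) (h : mor Z (fob (sh TC) X)),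
      dist TC f g h -> dist TD (fmap ef f) (fmap ef g) (mcomp (ephi X) (fmap ef h))
}.

Record adjunction (k : fieldType) (C D : kcat k) (L : functor D C) (G : functor C D) :=
  Adjunction {
  adj_unit : forall Y : ob D, mor Y (fob G (fob L Y));
  adj_counit : forall X : ob C, mor (fob L (fob G X)) X;
  adj_unit_nat : natural (fun X Y f => f) (fun X Y f => fmap G (fmap L f)) adj_unit;
  adj_counit_nat : natural (fun X Y f => fmap L (fmap G f)) (fun X Y f => f) adj_counit;
  adj_tri1 : forall Y, mcomp (adj_counit (fob L Y)) (fmap L (adj_unit Y)) = idm (fob L Y);
  adj_tri2 : forall X, mcomp (fmap G (adj_counit X)) (adj_unit (fob G X)) = idm (fob G X)
}.
Arguments adj_unit {k C D L G} _ Y.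

Definition fully_faithful (k : fieldType) (C D : kcat k) (F : functor C D) :=
  forall X Y : ob C, bijective (@fmap _ _ _ F X Y).

(* Hom^*(X,Y) = 0 : Hom(X, Y[i]) = 0 for all integers i *)
Definition homs_vanish (k : fieldType) (C : kcat k) (T : triang C) (X Y : ob C) :=
  forall n : nat,
    (forall f : mor X (iter n (fob (sh T)) Y), f = 0) /\
    (forall f : mor X (iter n (fob (shi T)) Y), f = 0).

Definition ess_image (k : fieldType) (C D : kcat k) (F : functor C D) (B : ob D) :=
  exists (A : ob C) (f : mor (fob F A) B), is_iso f.

(* D = < Xs, Ys > semiorthogonal decomposition of the full subcategory D *)
Definition sod (k : fieldType) (C : kcat k) (T : triang C) (D Xs Ys : ob C -> Prop) :=
  [/\ (forall B, Xs B -> D B),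
      (forall B, Ys B -> D B),
      (forall X Y, Xs X -> Ys Y -> homs_vanish T Y X) &
      (forall B, D B -> exists (BY BX : ob C) (u : mor BY B) (v : mor B BX)
                               (w : mor BX (fob (sh T) BY)),
                   [/\ Ys BY, Xs BX & dist T u v w])].

(* Main.v *)
Require Import Defs.
From mathcomp Require Import all_boot all_algebra.
Set Implicit Arguments. Unset Strict Implicit. Unset Printing Implicit Defensive.
Import GRing.Theory.
Local Open Scope ring_scope.

Section Basic.
Variables (k : fieldType) (C : kcat k).

Lemma comp0l (X Y Z : ob C) (f : mor X Y) : mcomp (0 : mor Y Z) f = 0.
Proof.
have := comp_linl (-1) (0 : mor Y Z) 0 f.
by rewrite scaleN1r oppr0 addr0 scaleN1r addNr => ->.
Qed.
Lemma comp0r (X Y Z : ob C) (g : mor Y Z) : mcomp g (0 : mor X Y) = 0.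
Proof.
have := comp_linr (-1) g (0 : mor X Y) 0.
by rewrite scaleN1r oppr0 addr0 scaleN1r addNr => ->.
Qed.
Lemma compNl (X Y Z : ob C) (g : mor Y Z) (f : mor X Y) : mcomp (- g) f = - mcomp g f.
Proof. by have := comp_linl (-1) g 0 f; rewrite !scaleN1r !addr0 comp0l addr0. Qed.
Lemma compNr (X Y Z : ob C) (g : mor Y Z) (f : mor X Y) : mcomp g (- f) = - mcomp g f.
Proof. by have := comp_linr (-1) g f 0; rewrite !scaleN1r !addr0 comp0r addr0. Qed.

Lemma zeroP (Z : ob C) : is_zero Z <-> idm Z = 0.
Proof.
split; first by move=> /(_ Z) [H _]; apply: H.
move=> H X; split=> f.
  by rewrite -[f]comp_idr H comp0r.
by rewrite -[f]comp_idl H comp0l.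
Qed.

Lemma iso_id (X : ob C) : is_iso (idm X).
Proof. by exists (idm X); rewrite comp_idl. Qed.
Lemma iso_comp (X Y Z : ob C) (g : mor Y Z) (f : mor X Y) :
  is_iso g -> is_iso f -> is_iso (mcomp g f).
Proof.
move=> [g' [g1 g2]] [f' [f1 f2]]; exists (mcomp f' g'); split.
  by rewrite comp_assoc -(comp_assoc f') g1 comp_idr.
by rewrite comp_assoc -(comp_assoc g) f2 comp_idr.
Qed.
Lemma iso_sym (X Y : ob C) (f : mor X Y) : is_iso f -> exists g : mor Y X, is_iso g /\ mcomp g f = idm X /\ mcomp f g = idm Y.
Proof. by move=> [g [g1 g2]]; exists g; split => //; exists f. Qed.
Lemma iso_rinv (X Y : ob C) (a : mor X Y) (b : mor Y X) : is_iso a -> mcomp a b = idm Y -> is_iso b.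
Proof.
move=> [a' [a1 a2]] H.
have -> : b = a' by rewrite -[b]comp_idl -a1 -comp_assoc H comp_idr.
by exists a.
Qed.
Lemma iso_linv (X Y : ob C) (a : mor X Y) (b : mor Y X) : is_iso a -> mcomp b a = idm X -> is_iso b.
Proof.
move=> [a' [a1 a2]] H.
have -> : b = a' by rewrite -[b]comp_idr -a2 comp_assoc H comp_idl.
by exists a.
Qed.

Definition zmaps (X W : ob C) := forall f : mor X W, f = 0.

Lemma zmaps_isoR (X W W' : ob C) (i : mor W W') : is_iso i -> zmaps X W' -> zmaps X W.
Proof.
move=> [i' [i1 i2]] H f.
by rewrite -[f]comp_idl -i1 -comp_assoc (H (mcomp i f)) comp0r.
Qed.
Lemma zmaps_isoR' (X W W' : ob C) (i : mor W' W) : is_iso i -> zmaps X W' -> zmaps X W.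
Proof. by move=> /iso_sym [j [Hj _]]; apply: zmaps_isoR Hj. Qed.
Lemma zmaps_isoL (X X' W : ob C) (i : mor X X') : is_iso i -> zmaps X' W -> zmaps X W.
Proof.
move=> [i' [i1 i2]] H f.
by rewrite -[f]comp_idr -i1 comp_assoc (H (mcomp f i')) comp0l.
Qed.
Lemma zmaps_zero (X Z : ob C) : is_zero Z -> zmaps X Z.
Proof. by move=> /(_ X) []. Qed.
Lemma zmaps_zeroL (X Z : ob C) : is_zero Z -> zmaps Z X.
Proof. by move=> /(_ X) []. Qed.
End Basic.

Section Func.
Variables (k : fieldType) (C D : kcat k) (G : functor C D).
Lemma fmap0 (X Y : ob C) : fmap G (0 : mor X Y) = 0.
Proof.
have := fmap_lin G (-1) (0 : mor X Y) 0.
by rewrite scaleN1r oppr0 addr0 scaleN1r addNr => ->.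
Qed.
Lemma fmapN (X Y : ob C) (f : mor X Y) : fmap G (- f) = - fmap G f.
Proof. by have := fmap_lin G (-1) f 0; rewrite !scaleN1r !addr0 fmap0 addr0. Qed.
Lemma fmap_iso (X Y : ob C) (f : mor X Y) : is_iso f -> is_iso (fmap G f).
Proof.
move=> [g [g1 g2]]; exists (fmap G g); by rewrite -!fmap_comp g1 g2 !fmap_id.
Qed.
Lemma fob_zero (Z : ob C) : is_zero Z -> is_zero (fob G Z).
Proof. by move=> /zeroP H; apply/zeroP; rewrite -fmap_id H fmap0. Qed.
End Func.

Lemma iter_iso (k : fieldType) (C : kcat k) (G : functor C C) n (X Y : ob C) (f : mor X Y) :
  is_iso f -> exists g : mor (iter n (fob G) X) (iter n (fob G) Y), is_iso g.
Proof.
move=> Hf; elim: n => [|n [g Hg]] /=; first by exists f.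
by exists (fmap G g); apply: fmap_iso.
Qed.
Lemma iter_zero (k : fieldType) (C : kcat k) (G : functor C C) n (Z : ob C) :
  is_zero Z -> is_zero (iter n (fob G) Z).
Proof. by move=> HZ; elim: n => //= n IH; apply: fob_zero. Qed.

Section Tri.
Variables (k : fieldType) (C : kcat k) (T : triang C).
Local Notation S := (sh T).
Local Notation Si := (shi T).

Lemma sh_faithful (X Y : ob C) (a b : mor X Y) : fmap S a = fmap S b -> a = b.
Proof.
move=> H.
have [e [e1 e2]] := sh_eta_iso T X.
have N := sh_eta_nat T.
rewrite -[a]comp_idl -[b]comp_idl.
have [g [g1 g2]] := sh_eta_iso T Y.
rewrite -g1 -!comp_assoc (N _ _ a) (N _ _ b) /=.
by rewrite H.
Qed.

Lemma shi_faithful (X Y : ob C) (a b : mor X Y) : fmap Si a = fmap Si b -> a = b.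
Proof.
move=> H.
have N := sh_eps_nat T.
have [e [e1 e2]] := sh_eps_iso T X.
rewrite -[a]comp_idr -[b]comp_idr -e2 !comp_assoc -(N _ _ a) -(N _ _ b) /=.
by rewrite H.
Qed.

Lemma sh_full (X Y : ob C) (c : mor (fob S X) (fob S Y)) : exists v : mor X Y, fmap S v = c.
Proof.
have [e [e1 e2]] := sh_eta_iso T Y.
exists (mcomp e (mcomp (fmap Si c) (sh_eta T X))).
apply: shi_faithful.
have N := sh_eta_nat T.
have [x [x1 x2]] := sh_eta_iso T X.
rewrite -[LHS]comp_idr -x2 comp_assoc -(N _ _ _) /=.
by rewrite !comp_assoc e2 comp_idl -comp_assoc x2 comp_idr.
Qed.

Lemma dist_rot X Y Z (f : mor X Y) (g : mor Y Z) (h : mor Z (fob S X)) :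
  dist T f g h -> dist T g h (- fmap S f).
Proof. by move/TR2. Qed.

Lemma dist_zt (Z0 W : ob C) : is_zero Z0 ->
  dist T (0 : mor Z0 W) (idm W) (0 : mor W (fob S Z0)).
Proof.
move=> HZ; apply/TR2; rewrite fmap0 oppr0.
by apply: TR1_id; apply: fob_zero.
Qed.

Lemma dist_zt2 (Z0 W : ob C) : is_zero Z0 ->
  dist T (0 : mor W Z0) (0 : mor Z0 (fob S W)) (- fmap S (idm W)).
Proof. by move=> HZ; apply: dist_rot; apply: TR1_id. Qed.

Lemma dist_comp0 X Y Z (f : mor X Y) (g : mor Y Z) (h : mor Z (fob S X)) :
  dist T f g h -> mcomp g f = 0.
Proof.
move=> H; have [Z0 HZ] := zero_ex T.
have H0 := TR1_id T X HZ.
have [c [c1 _]] := TR3 (a := idm X) (b := f) H0 H erefl.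
by rewrite -c1 comp0r.
Qed.

Lemma exact_cov X Y Z (f : mor X Y) (g : mor Y Z) (h : mor Z (fob S X)) W (u : mor W Y) :
  dist T f g h -> mcomp g u = 0 -> exists v : mor W X, mcomp f v = u.
Proof.
move=> H gu; have [Z0 HZ] := zero_ex T.
have H0 := dist_zt2 W HZ.
have E : mcomp (0 : mor Z0 Z) 0 = mcomp g u by rewrite gu comp0l.
have [c [_ c2]] := TR3 (a := u) (b := 0) H0 (dist_rot H) E.
have [v Hv] := sh_full c.
exists v; apply: sh_faithful.
move: c2; rewrite compNr compNl fmap_id comp_idr -Hv -fmap_comp => /oppr_inj.
by [].
Qed.

Lemma exact_contra X Y Z (f : mor X Y) (g : mor Y Z) (h : mor Z (fob S X)) W (u : mor Y W) :
  dist T f g h -> mcomp u f = 0 -> exists v : mor Z W, mcomp v g = u.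
Proof.
move=> H uf; have [Z0 HZ] := zero_ex T.
have H0 := dist_zt W HZ.
have E : mcomp u f = mcomp (0 : mor Z0 W) 0 by rewrite uf comp0l.
have [c [c1 _]] := TR3 (a := 0) (b := u) H H0 E.
by exists c; rewrite c1 comp_idl.
Qed.

Lemma zero_sh (X : ob C) : is_zero (fob S X) -> is_zero X.
Proof.
move=> /zeroP H; apply/zeroP; apply: sh_faithful.
by rewrite fmap_id H fmap0.
Qed.

Lemma tri_mid_iso X Y Z (f : mor X Y) (g : mor Y Z) (h : mor Z (fob S X)) :
  dist T f g h -> is_iso g -> is_zero X.
Proof.
move=> H [g' [g1 g2]].
have f0 : f = 0.
  by rewrite -[f]comp_idl -g1 -comp_assoc (dist_comp0 H) comp0r.
have h0 : h = 0.
  by rewrite -[h]comp_idr -g2 comp_assoc (dist_comp0 (dist_rot H)) comp0l.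
have H2 := dist_rot (dist_rot H).
have E : mcomp (idm (fob S X)) h = 0 by rewrite h0 comp0r.
have [v Hv] := exact_contra H2 E.
apply: zero_sh; apply/zeroP.
by rewrite -Hv f0 fmap0 oppr0 comp0r.
Qed.

Lemma tri_third_zero X Y Z (f : mor X Y) (g : mor Y Z) (h : mor Z (fob S X)) :
  dist T f g h -> is_zero Z -> is_iso f.
Proof.
move=> H HZ.
have [s Hs] := exact_cov (u := idm Y) H (zmaps_zero HZ _).
have H2 := dist_rot (dist_rot H).
have [v Hv] := exact_contra (u := idm (fob S X)) H2 (zmaps_zeroL HZ _).
have [r' Hr] := sh_full v.
have rf : mcomp (- r') f = idm X.
  apply: sh_faithful; rewrite fmap_comp fmapN compNl fmap_id Hr.
  by rewrite -Hv compNr.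
have sr : s = - r' by rewrite -[s]comp_idl -rf -comp_assoc Hs comp_idr.
by exists s; split; rewrite // sr.
Qed.

Lemma iso_shi_comm_dummy : True. Proof. by []. Qed.
End Tri.

Section Ex.
Variables (k : fieldType) (C D : kcat k) (TC : triang C) (TD : triang D)
  (G : exfunctor TC TD).

Lemma ex_shi (Y : ob C) : exists i : mor (fob G (fob (shi TC) Y)) (fob (shi TD) (fob G Y)), is_iso i.
Proof.
have [j [Hj _]] := iso_sym (ephi_iso G (fob (shi TC) Y)).
exists (mcomp (fmap (shi TD) (fmap G (sh_eps TC Y)))
         (mcomp (fmap (shi TD) j) (sh_eta TD (fob G (fob (shi TC) Y))))).
apply: iso_comp; first by do 2 apply: fmap_iso; apply: sh_eps_iso.
apply: iso_comp; first by apply: fmap_iso.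
by apply: sh_eta_iso.
Qed.

Lemma ex_iter_sh n (Y : ob C) :
  exists i : mor (fob G (iter n (fob (sh TC)) Y)) (iter n (fob (sh TD)) (fob G Y)), is_iso i.
Proof.
elim: n => [|n [i Hi]] /=; first by exists (idm _); apply: iso_id.
exists (mcomp (fmap (sh TD) i) (ephi G _)).
by apply: iso_comp; [apply: fmap_iso | apply: ephi_iso].
Qed.

Lemma ex_iter_shi n (Y : ob C) :
  exists i : mor (fob G (iter n (fob (shi TC)) Y)) (iter n (fob (shi TD)) (fob G Y)), is_iso i.
Proof.
elim: n => [|n [i Hi]] /=; first by exists (idm _); apply: iso_id.
have [j Hj] := ex_shi (iter n (fob (shi TC)) Y).
exists (mcomp (fmap (shi TD) i) j).
by apply: iso_comp; [apply: fmap_iso | ].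
Qed.
End Ex.

Section Adj.
Variables (k : fieldType) (C D : kcat k) (Lf : functor D C) (G : functor C D)
  (a : adjunction Lf G).

Lemma unat (Y Y' : ob D) (f : mor Y Y') :
  mcomp (adj_unit a Y') f = mcomp (fmap G (fmap Lf f)) (adj_unit a Y).
Proof. exact: (adj_unit_nat a f). Qed.
Lemma cnat (X X' : ob C) (f : mor X X') :
  mcomp (adj_counit a X') (fmap Lf (fmap G f)) = mcomp f (adj_counit a X).
Proof. exact: (adj_counit_nat a f). Qed.

Lemma adj_decomp1 (Y : ob D) (Z : ob C) (f : mor Y (fob G Z)) :
  f = mcomp (fmap G (mcomp (adj_counit a Z) (fmap Lf f))) (adj_unit a Y).
Proof.
rewrite fmap_comp -comp_assoc -unat comp_assoc.
by rewrite adj_tri2 comp_idl.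
Qed.

Lemma adj_decomp2 (Y : ob D) (Z : ob C) (g : mor (fob Lf Y) Z) :
  g = mcomp (adj_counit a Z) (fmap Lf (mcomp (fmap G g) (adj_unit a Y))).
Proof.
rewrite fmap_comp comp_assoc cnat -comp_assoc.
by rewrite adj_tri1 comp_idr.
Qed.

Lemma adjz1 (Y : ob D) (Z : ob C) : zmaps (fob Lf Y) Z -> zmaps Y (fob G Z).
Proof. by move=> H f; rewrite (adj_decomp1 f) [mcomp (adj_counit a Z) _]H fmap0 comp0l. Qed.

Lemma adjz2 (Y : ob D) (Z : ob C) : zmaps Y (fob G Z) -> zmaps (fob Lf Y) Z.
Proof. by move=> H g; rewrite (adj_decomp2 g) [mcomp (fmap G g) _]H fmap0 comp0r. Qed.

Lemma adj_uniq (Y : ob D) (Z : ob C) (h h' : mor (fob Lf Y) Z) :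
  mcomp (fmap G h) (adj_unit a Y) = mcomp (fmap G h') (adj_unit a Y) -> h = h'.
Proof. by move=> H; rewrite (adj_decomp2 h) (adj_decomp2 h') H. Qed.

Lemma counit_iso : fully_faithful G -> forall X, is_iso (adj_counit a X).
Proof.
move=> ff X.
have [ginv g1 g2] := ff X (fob Lf (fob G X)).
have [ginv' g1' g2'] := ff X X.
set g := ginv (adj_unit a (fob G X)).
have Gg : fmap G g = adj_unit a (fob G X) by rewrite /g g2.
exists g; split.
  apply: adj_uniq.
  by rewrite !fmap_comp -comp_assoc adj_tri2 comp_idr Gg fmap_id comp_idl.
apply: (can_inj g1').
by rewrite fmap_comp Gg adj_tri2 fmap_id.
Qed.

Lemma unit_iso_G : fully_faithful G -> forall X, is_iso (adj_unit a (fob G X)).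
Proof.
move=> ff X.
apply: (iso_rinv (a := fmap G (adj_counit a X))); last by apply: adj_tri2.
by apply: fmap_iso; apply: counit_iso.
Qed.

Lemma unit_iso_ess : fully_faithful G -> forall B, ess_image G B -> is_iso (adj_unit a B).
Proof.
move=> ff B [X [i Hi]].
have [j [Hj [j1 j2]]] := iso_sym Hi.
have -> : adj_unit a B = mcomp (mcomp (fmap G (fmap Lf i)) (adj_unit a (fob G X))) j.
  by rewrite -unat -comp_assoc j2 comp_idr.
apply: iso_comp => //; apply: iso_comp; last by apply: unit_iso_G.
by do 2 apply: fmap_iso.
Qed.

Lemma Lunit_iso : fully_faithful G -> forall B, is_iso (fmap Lf (adj_unit a B)).
Proof.
move=> ff B.
apply: (iso_rinv (a := adj_counit a (fob Lf B))); last by apply: adj_tri1.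
by apply: counit_iso.
Qed.
End Adj.
Lemma sod_ext (k : fieldType) (C : kcat k) (T : triang C) (D Xs Y Y' : ob C -> Prop) :
  (forall B, Y B <-> Y' B) -> sod T D Xs Y -> sod T D Xs Y'.
Proof.
move=> E [h1 h2 h3 h4]; split.
- exact: h1.
- by move=> B /E; apply: h2.
- by move=> X Y0 HX /E; apply: h3.
move=> B /h4 [BY [BX [u [v [w [H1 H2 H3]]]]]].
by exists BY, BX, u, v, w; split => //; apply/E.
Qed.
Local Close Scope ring_scope.
Unset Implicit Arguments.
Theorem theorem3p22 (k : fieldType) (CA CB : kcat k)
  (TA : triang CA) (TB : triang CB)
  (F : exfunctor TA TB) (L R : exfunctor TB TA)
  (LF : adjunction L F) (FR : adjunction F R)
  (Fff : fully_faithful F)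
  (* dual twist  T' B -> B --eta_L--> F L B -> (T' B)[1] *)
  (T' : ob CB -> ob CB) (tm : forall B, mor (T' B) B)
  (td : forall B, mor (fob F (fob L B)) (fob (sh TB) (T' B)))
  (Htw : forall B, dist TB (tm B) (adj_unit LF B) (td B))
  (A : ob CA) :
  let BFA := fun B : ob CB => homs_vanish TA A (fob R (T' B)) in
  let Y1 := fun B : ob CB => is_zero (fob L B) /\ homs_vanish TA A (fob R B) in
  let Y2 := fun B : ob CB => is_zero (fob L B) /\ homs_vanish TB (fob F A) B in
  sod TB BFA (ess_image F) Y1 /\ sod TB BFA (ess_image F) Y2.
Proof.
move=> BFA Y1 Y2.
have hvFR : forall W, homs_vanish TB (fob F A) W <-> homs_vanish TA A (fob R W).
  move=> W; split=> H n.
    have [i Hi] := ex_iter_sh R n W.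
    have [j Hj] := ex_iter_shi R n W.
    split.
      by apply: (zmaps_isoR' Hi); apply: (adjz1 FR); apply: (H n).1.
    by apply: (zmaps_isoR' Hj); apply: (adjz1 FR); apply: (H n).2.
  have [i Hi] := ex_iter_sh R n W.
  have [j Hj] := ex_iter_shi R n W.
  split.
    by apply: (adjz2 FR); apply: (zmaps_isoR Hi); apply: (H n).1.
  by apply: (adjz2 FR); apply: (zmaps_isoR Hj); apply: (H n).2.
have S1 : sod TB BFA (ess_image F) Y1.
  split.
  - move=> B HB.
    have Hu := unit_iso_ess LF Fff HB.
    have HZ := fob_zero R (tri_mid_iso (Htw B) Hu).
    by move=> n; split; apply: zmaps_zero; apply: iter_zero.
  - move=> B [LB0 hv].
    have Hi := fmap_iso R (tri_third_zero (Htw B) (fob_zero F LB0)).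
    move=> n; have [j Hj] := iter_iso (sh TA) n Hi.
    have [j' Hj'] := iter_iso (shi TA) n Hi.
    by split; [apply: (zmaps_isoR Hj); apply: (hv n).1 | apply: (zmaps_isoR Hj'); apply: (hv n).2].
  - move=> X Y [A' [i Hi]] [LY0 _] n.
    have Z0 : forall W, zmaps Y (fob F W) by move=> W; apply: (adjz1 LF); apply: zmaps_zeroL.
    have [j Hj] := iter_iso (sh TB) n Hi.
    have [j' Hj'] := iter_iso (shi TB) n Hi.
    have [e He] := ex_iter_sh F n A'.
    have [e' He'] := ex_iter_shi F n A'.
    split.
      by apply: (zmaps_isoR' Hj); apply: (zmaps_isoR' He); apply: Z0.
    by apply: (zmaps_isoR' Hj'); apply: (zmaps_isoR' He'); apply: Z0.
  - move=> B HB.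
    exists (T' B), (fob F (fob L B)), (tm B), (adj_unit LF B), (td B); split => //.
      split => //.
      exact: tri_mid_iso (ef_dist L (Htw B)) (Lunit_iso LF Fff B).
    by exists (fob L B), (idm _); apply: iso_id.
split => //.
apply: sod_ext S1 => B; rewrite /Y1 /Y2; split=> [] [H1 H2]; split => //; apply/hvFR => //.
Qed.
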